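(* $(U_0,\alpha_N)$ is a corecursive algebra for $N\otimes-$ on $\mathsf{SquaMS}$, and $(U_0,\alpha_N^{-1})$ is a final coalgebra for this same functor.
   Context: Let $M_0=\{(r,s)\in[0,1]^2: r\in\{0,1\}\text{ or } s\in\{0,1\}\}$. A square metric space is a pair $(X,S_X)$ with $X$ a metric space with all distances at most $2$ and $S_X\colon M_0\to X$ injective such that (sq1) for $i\in\{0,1\}$, $r,s\in[0,1]$: $d_X(S_X(i,r),S_X(i,s))=|s-r|$ and $d_X(S_X(r,i),S_X(s,i))=|s-r|$; (sq2) $d_X(S_X(r,s),S_X(t,u))\ge|r-t|+|s-u|$. $\mathsf{SquaMS}$: these objects, with short maps $f$ satisfying $f\circ S_X=S_Y$ as morphisms. Let $N=\{0,1,2\}^2$, also viewed as points of $\mathbb{R}^2$. For $X$ in $\mathsf{SquaMS}$, $N\otimes X=(N\times X)/\!\sim$, where $\sim$ is generated by $(m,S_X(p))\sim(n,S_X(q))$ whenever $m,n\in N$ differ by exactly $1$ in exactly one coordinate and $(m+p)/3=(n+q)/3$; $n\otimes x$ is the class of $(n,x)$. With $d((a,u),(b,v))=\frac13 d_X(u,v)$ if $a=b$ and $2$ otherwise, $N\otimes X$ gets the quotient metric (infimum over finite chains of sums of consecutive distances, $\sim$-related consecutive pairs counting $0$). $S_{N\otimes X}(p)=n\otimes S_X(3p-n)$ for any $n\in N$ with $p\in(n+[0,1]^2)/3$; $(N\otimes f)(n\otimes x)=n\otimes f(x)$. $U_0=[0,1]^2$ with the taxicab metric $d((x,y),(x',y'))=|x-x'|+|y-y'|$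 and $S_{U_0}$ the inclusion of $M_0$. $\alpha_N\colon N\otimes U_0\to U_0$, $\alpha_N(n\otimes z)=\frac13(n+z)$ (an isomorphism). An algebra $(A,a\colon FA\to A)$ is corecursive if for every coalgebra $e\colon X\to FX$ there is a unique morphism $e^\dagger\colon X\to A$ with $e^\dagger=a\circ Fe^\dagger\circ e$. A final coalgebra admits a unique coalgebra morphism from every coalgebra. *)

(* Defs.v *)
From Stdlib Require Import Reals Lra Relations ProofIrrelevance.
From Coquelicot Require Import Rbar Lub.
Open Scope R_scope.

Record MetricSpace := {
  ms_car :> Type;
  ms_dist : ms_car -> ms_car -> R;
  ms_dist_refl : forall x, ms_dist x x = 0;
  ms_dist_eq0 : forall x y, ms_dist x y = 0 -> x = y;
  ms_dist_sym : forall x y, ms_dist x y = ms_dist y x;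
  ms_dist_tri : forall x y z, ms_dist x z <= ms_dist x y + ms_dist y z }.
Arguments ms_dist {m} _ _.

Definition in01 (x : R) : Prop := 0 <= x <= 1.
Definition is01 (x : R) : Prop := x = 0 \/ x = 1.

Definition inM0 (p : R * R) : Prop :=
  in01 (fst p) /\ in01 (snd p) /\ (is01 (fst p) \/ is01 (snd p)).

(* ---------- Square metric spaces ----------
   S_X : M_0 -> X is represented by a total function R*R -> X of which only
   the values on M_0 are ever used. *)
Record SquaMS := {
  sq_ms :> MetricSpace;
  sq_S : R * R -> sq_ms;
  sq_bound : forall x y : sq_ms, ms_dist x y <= 2;
  sq_inj : forall p q, inM0 p -> inM0 q -> sq_S p = sq_S q -> p = q;
  sq_1a : forall i r s, is01 i -> in01 r -> in01 s ->
            ms_dist (sq_S (i, r)) (sq_S (i, s)) = Rabs (s - r);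
  sq_1b : forall i r s, is01 i -> in01 r -> in01 s ->
            ms_dist (sq_S (r, i)) (sq_S (s, i)) = Rabs (s - r);
  sq_2 : forall r s t u, inM0 (r, s) -> inM0 (t, u) ->
            ms_dist (sq_S (r, s)) (sq_S (t, u)) >= Rabs (r - t) + Rabs (s - u) }.
Arguments sq_S {s} _ : rename.

Definition is_short {X Y : MetricSpace} (f : X -> Y) : Prop :=
  forall x y, ms_dist (f x) (f y) <= ms_dist x y.
Definition is_mor {X Y : SquaMS} (f : X -> Y) : Prop :=
  is_short f /\ forall p, inM0 p -> f (sq_S p) = sq_S p.

Inductive D3 := d0 | d1 | d2.
Definition d3R (a : D3) : R := match a with d0 => 0 | d1 => 1 | d2 => 2 end.
Definition N3 : Type := (D3 * D3)%type.
Lemma D3_eq_dec (a b : D3) : {a = b} + {a <> b}.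
Proof. decide equality. Qed.
Lemma N_eq_dec (a b : N3) : {a = b} + {a <> b}.
Proof. decide equality; apply D3_eq_dec. Qed.

Definition adjacent (m n : N3) : Prop :=
  (Rabs (d3R (fst m) - d3R (fst n)) = 1 /\ snd m = snd n) \/
  (fst m = fst n /\ Rabs (d3R (snd m) - d3R (snd n)) = 1).

Definition shrink (n : N3) (p : R * R) : R * R :=
  ((d3R (fst n) + fst p) / 3, (d3R (snd n) + snd p) / 3).
Definition expand (p : R * R) (n : N3) : R * R :=
  (3 * fst p - d3R (fst n), 3 * snd p - d3R (snd n)).
Definition inTile (n : N3) (p : R * R) : Prop :=
  d3R (fst n) / 3 <= fst p <= (d3R (fst n) + 1) / 3 /\
  d3R (snd n) / 3 <= snd p <= (d3R (snd n) + 1) / 3.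

(* ---------- N (x) X, as a setoid on representatives N3 * X ---------- *)
Section Tensor.
Variable X : SquaMS.

Definition tgen (a b : N3 * X) : Prop :=
  exists m n p q, a = (m, sq_S p) /\ b = (n, sq_S q) /\ inM0 p /\ inM0 q /\
    adjacent m n /\ shrink m p = shrink n q.

Definition tequiv : N3 * X -> N3 * X -> Prop := clos_refl_sym_trans _ tgen.

Definition bdist (a b : N3 * X) : R :=
  if N_eq_dec (fst a) (fst b) then ms_dist (snd a) (snd b) / 3 else 2.

Inductive chain_val : N3 * X -> N3 * X -> R -> Prop :=
| cv_refl a : chain_val a a 0
| cv_step a b c s : chain_val b c s -> chain_val a c (bdist a b + s)
| cv_jump a b c s : tequiv a b -> chain_val b c s -> chain_val a c s.

(* quotient (pseudo)distance between the classes of a and b *)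
Definition qdist (a b : N3 * X) : R := real (Glb_Rbar (chain_val a b)).

(* a coalgebra X -> N (x) X, given by a choice of representatives: a SquaMS
   morphism (short for the quotient metric, and e o S_X = S_{N (x) X}) *)
Definition is_coalg (e : X -> N3 * X) : Prop :=
  (forall x y, qdist (e x) (e y) <= ms_dist x y) /\
  (forall p n, inM0 p -> inTile n p -> tequiv (e (sq_S p)) (n, sq_S (expand p n))).
End Tensor.
Arguments tequiv {X} _ _.
Arguments qdist {X} _ _.

Definition tmap {X Y : SquaMS} (f : X -> Y) (a : N3 * X) : N3 * Y :=
  (fst a, f (snd a)).

Definition U0car : Type := {z : R * R | in01 (fst z) /\ in01 (snd z)}.
Definition taxi (z w : U0car) : R :=
  Rabs (fst (proj1_sig z) - fst (proj1_sig w)) + Rabs (snd (proj1_sig z) - snd (proj1_sig w)).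

Ltac rabs_lra :=
  unfold Rabs in *;
  repeat match goal with
         | |- context [Rcase_abs ?a] => destruct (Rcase_abs a)
         | H : context [Rcase_abs ?a] |- _ => destruct (Rcase_abs a)
         end; lra.

Lemma U0_eq (z w : U0car) : proj1_sig z = proj1_sig w -> z = w.
Proof.
  destruct z as [z hz], w as [w hw]; simpl; intros ->.
  f_equal; apply proof_irrelevance.
Qed.

Definition U0ms : MetricSpace.
Proof.
  refine {| ms_car := U0car; ms_dist := taxi |}.
  - intros [[x y] h]; unfold taxi; simpl; rabs_lra.
  - intros [[x y] h] [[x' y'] h'] H; apply U0_eq; unfold taxi in H; simpl in *.
    f_equal; rabs_lra.
  - intros [[x y] h] [[x' y'] h']; unfold taxi; simpl; rabs_lra.
  - intros [[x y] h] [[x' y'] h'] [[x'' y''] h'']; unfold taxi; simpl; rabs_lra.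
Defined.

Definition clamp01 (x : R) : R := Rmax 0 (Rmin 1 x).
Lemma clamp01_in (x : R) : in01 (clamp01 x).
Proof. unfold clamp01, in01, Rmax, Rmin; repeat destruct Rle_dec; lra. Qed.
Lemma clamp01_id (x : R) : in01 x -> clamp01 x = x.
Proof. unfold clamp01, in01, Rmax, Rmin; intros; repeat destruct Rle_dec; lra. Qed.

(* S_{U_0}: the inclusion of M_0 (clamped to [0,1]^2 outside M_0, irrelevant) *)
Definition SU0 (p : R * R) : U0car :=
  exist _ (clamp01 (fst p), clamp01 (snd p)) (conj (clamp01_in _) (clamp01_in _)).

Lemma in01_is01 x : is01 x -> in01 x.
Proof. unfold is01, in01; lra. Qed.

Definition U0 : SquaMS.
Proof.
  refine {| sq_ms := U0ms; sq_S := SU0 |}.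
  - intros [[x y] [hx hy]] [[x' y'] [hx' hy']]; simpl; unfold taxi, in01 in *; simpl in *; rabs_lra.
  - intros [x y] [x' y'] [hx [hy _]] [hx' [hy' _]] H; simpl in *.
    apply (f_equal (@proj1_sig _ _)) in H; simpl in H.
    rewrite !clamp01_id in H by assumption; exact H.
  - intros i r s hi hr hs; simpl; unfold taxi; simpl.
    rewrite !clamp01_id by (auto using in01_is01); rabs_lra.
  - intros i r s hi hr hs; simpl; unfold taxi; simpl.
    rewrite !clamp01_id by (auto using in01_is01); rabs_lra.
  - intros r s t u [hr [hs _]] [ht [hu _]]; simpl in *; unfold taxi; simpl.
    rewrite !clamp01_id by assumption; lra.
Defined.

Lemma shrink_in (a : D3) (x : R) : in01 x -> in01 ((d3R a + x) / 3).
Proof. unfold in01; destruct a; simpl; lra. Qed.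

Definition alpha (c : N3 * U0) : U0 :=
  let n := fst c in let z := proj1_sig (snd c) in
  let h := proj2_sig (snd c) in
  exist _ ((d3R (fst n) + fst z) / 3, (d3R (snd n) + snd z) / 3)
    (conj (shrink_in _ _ (proj1 h)) (shrink_in _ _ (proj2 h))).

Definition tidx (x : R) : D3 :=
  if Rlt_dec x (1/3) then d0 else if Rlt_dec x (2/3) then d1 else d2.
Lemma tidx_ok (x : R) : in01 x -> in01 (3 * x - d3R (tidx x)).
Proof. unfold tidx, in01; repeat destruct Rlt_dec; simpl; lra. Qed.

Definition alpha_inv (z : U0) : N3 * U0 :=
  let p := proj1_sig z in let h := proj2_sig z in
  ((tidx (fst p), tidx (snd p)),
   exist _ (3 * fst p - d3R (tidx (fst p)), 3 * snd p - d3R (tidx (snd p)))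
     (conj (tidx_ok _ (proj1 h)) (tidx_ok _ (proj2 h))) : U0car).

(* Main.v *)
Require Import Defs.
From Stdlib Require Import Reals Lra Lia Relations ProofIrrelevance.
From Stdlib Require Import IndefiniteDescription FunctionalExtensionality.
From Coquelicot Require Import Rbar Lub.
Open Scope R_scope.

Lemma dist_ge0 (M : MetricSpace) (x y : M) : 0 <= ms_dist x y.
Proof.
  pose proof (ms_dist_tri M x y x). rewrite ms_dist_refl in H.
  rewrite (ms_dist_sym M y x) in H. lra.
Qed.

Lemma glb_spec (E : R -> Prop) (L t0 : R) : E t0 -> (forall t, E t -> L <= t) ->
  (forall t, E t -> real (Glb_Rbar E) <= t) /\
  (forall L', (forall t, E t -> L' <= t) -> L' <= real (Glb_Rbar E)).
Proof.
  intros Et0 HL.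
  destruct (Glb_Rbar_correct E) as [lb glb]; revert lb glb.
  destruct (Glb_Rbar E) as [g| |]; simpl; intros lb glb.
  - split.
    + intros t Et. exact (lb t Et).
    + intros L' HL'. exact (glb (Finite L') HL').
  - exfalso. exact (lb t0 Et0).
  - exfalso. exact (glb (Finite L) HL).
Qed.

Lemma taxi_ge0 (z w : U0car) : 0 <= taxi z w.
Proof. destruct z as [[a b] h], w as [[c d] h']; unfold taxi; simpl. rabs_lra. Qed.
Lemma taxi_le2 (z w : U0car) : taxi z w <= 2.
Proof. destruct z as [[a b] [h1 h2]], w as [[c d] [h3 h4]]; unfold taxi, in01 in *; simpl in *. rabs_lra. Qed.
Lemma taxi_sym (z w : U0car) : taxi z w = taxi w z.
Proof. destruct z as [[a b] h], w as [[c d] h']; unfold taxi; simpl. rabs_lra. Qed.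
Lemma taxi_tri (z w u : U0car) : taxi z u <= taxi z w + taxi w u.
Proof. destruct z as [[a b] h], w as [[c d] h'], u as [[e f] h'']; unfold taxi; simpl. rabs_lra. Qed.
Lemma taxi_eq0 (z w : U0car) : taxi z w <= 0 -> z = w.
Proof.
  intros H. apply (ms_dist_eq0 U0ms). simpl. pose proof (taxi_ge0 z w). lra.
Qed.

Lemma taxi_alpha_same (n : N3) (u v : U0) :
  taxi (alpha (n, u)) (alpha (n, v)) = taxi u v / 3.
Proof.
  destruct u as [[a b] h], v as [[c d] h']; unfold taxi, alpha; simpl.
  rabs_lra.
Qed.

Lemma SU0_val (z : R * R) : in01 (fst z) -> in01 (snd z) -> proj1_sig (SU0 z) = z.
Proof. intros h1 h2; destruct z; simpl in *; rewrite !clamp01_id by assumption; reflexivity. Qed.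

Lemma SU0_proj (z : U0car) : SU0 (proj1_sig z) = z.
Proof. apply U0_eq. destruct z as [z [h1 h2]]. apply SU0_val; assumption. Qed.

Lemma inM0_in01 p : inM0 p -> in01 (fst p) /\ in01 (snd p).
Proof. intros [h1 [h2 _]]; auto. Qed.

Lemma alpha_SU0 (m : N3) (q : R * R) : in01 (fst q) -> in01 (snd q) ->
  alpha (m, SU0 q) = SU0 (shrink m q).
Proof.
  intros h1 h2. apply U0_eq. rewrite SU0_val.
  - unfold alpha, shrink; simpl. rewrite !clamp01_id by assumption. reflexivity.
  - apply shrink_in; auto.
  - apply shrink_in; auto.
Qed.

Lemma pow3_pos k : 0 < 3 ^ k.
Proof. apply pow_lt; lra. Qed.
Lemma pow3_ge' k : INR k + 1 <= 3 ^ k.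
Proof.
  induction k. simpl; lra.
  rewrite S_INR. simpl. pose proof (pos_INR k). lra.
Qed.
Lemma pow3_ge k : INR k <= 3 ^ k.
Proof. pose proof (pow3_ge' k); lra. Qed.
Lemma small3 (c eps : R) : 0 < eps -> exists N, c / 3 ^ N < eps.
Proof.
  intros He. destruct (Rle_lt_dec c 0) as [Hc|Hc].
  - exists 0%nat. simpl. lra.
  - destruct (archimed_cor1 (eps / c)) as [N [HN HN0]].
    + apply Rdiv_lt_0_compat; lra.
    + exists N. pose proof (pow3_ge N). pose proof (pow3_pos N).
      assert (0 < INR N) by (apply lt_0_INR; exact HN0).
      apply Rle_lt_trans with (c / INR N).
      * unfold Rdiv. apply Rmult_le_compat_l; [lra|]. apply Rinv_le_contravar; lra.
      * apply (Rmult_lt_compat_l c) in HN; [|lra].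
        replace (c * (eps / c)) with eps in HN by (field; lra). unfold Rdiv. lra.
Qed.
Lemma le_pow3 (a c : R) : (forall k, a <= c / 3 ^ k) -> a <= 0.
Proof.
  intros H. destruct (Rle_lt_dec a 0) as [h|h]; auto.
  destruct (small3 c a h) as [N HN]. specialize (H N). lra.
Qed.

Section Chains.
Variable X : SquaMS.

Lemma bdist_ge0 (a b : N3 * X) : 0 <= bdist X a b.
Proof. unfold bdist. destruct N_eq_dec. pose proof (dist_ge0 _ (snd a) (snd b)); lra. lra. Qed.

Lemma chain_ge0 a b s : chain_val X a b s -> 0 <= s.
Proof. induction 1 as [|a b c s H IH|a b c s H1 H IH]; auto. lra. pose proof (bdist_ge0 a b); lra. Qed.

Lemma chain_app a b c s t : chain_val X a b s -> chain_val X b c t -> chain_val X a c (s + t).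
Proof.
  intros H; revert c t; induction H; intros d t Ht.
  - rewrite Rplus_0_l; auto.
  - rewrite Rplus_assoc. apply cv_step. auto.
  - eapply cv_jump; eauto.
Qed.

Lemma qdist_le a b s : chain_val X a b s -> qdist a b <= s.
Proof.
  intros H. unfold qdist. apply (proj1 (glb_spec _ 0 s H (chain_ge0 a b))). exact H.
Qed.

Lemma qdist_ge a b L : (forall s, chain_val X a b s -> L <= s) -> L <= qdist a b.
Proof.
  intros H. unfold qdist.
  assert (Hc : chain_val X a b (bdist X a b + 0)) by (apply cv_step, cv_refl).
  apply (proj2 (glb_spec _ L _ Hc H)). exact H.
Qed.

Lemma tequiv_alpha_tmap (f : X -> U0) :
  (forall p, inM0 p -> f (sq_S p) = SU0 p) ->
  forall a b, tequiv a b -> alpha (tmap f a) = alpha (tmap f b).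
Proof.
  intros Hf a b H. induction H as [a b Hg| a | a b H IH | a b c H1 IH1 H2 IH2].
  - destruct Hg as (m & n & p & q & -> & -> & Hp & Hq & _ & Hs).
    unfold tmap; simpl. rewrite (Hf p Hp), (Hf q Hq).
    destruct (inM0_in01 p Hp), (inM0_in01 q Hq).
    rewrite !alpha_SU0 by assumption. rewrite Hs. reflexivity.
  - reflexivity.
  - auto.
  - congruence.
Qed.

Lemma chain_alpha (f : X -> U0) :
  (forall p, inM0 p -> f (sq_S p) = SU0 p) -> is_short f ->
  forall a b s, chain_val X a b s -> taxi (alpha (tmap f a)) (alpha (tmap f b)) <= s.
Proof.
  intros Hf Hs a b s H. induction H.
  - pose proof (ms_dist_refl U0ms (alpha (tmap f a))). simpl in H. lra.
  - eapply Rle_trans; [apply taxi_tri with (w := alpha (tmap f b))|].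
    apply Rplus_le_compat; auto.
    destruct a as [n u], b as [m v]; unfold bdist, tmap; simpl.
    destruct (N_eq_dec n m) as [<-|ne].
    + rewrite taxi_alpha_same. pose proof (Hs u v). simpl in H0. lra.
    + apply taxi_le2.
  - rewrite (tequiv_alpha_tmap f Hf a b H). auto.
Qed.

Lemma qdist_alpha (f : X -> U0) :
  (forall p, inM0 p -> f (sq_S p) = SU0 p) -> is_short f ->
  forall a b, taxi (alpha (tmap f a)) (alpha (tmap f b)) <= qdist a b.
Proof.
  intros Hf Hs a b. apply qdist_ge. intros s; apply chain_alpha; auto.
Qed.
End Chains.

Definition col (a : D3) (x : R) : Prop := d3R a / 3 <= x <= (d3R a + 1) / 3.
Lemma inTile_col n z : inTile n z = (col (fst n) (fst z) /\ col (snd n) (snd z)).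
Proof. reflexivity. Qed.

Lemma col_tidx x : in01 x -> col (tidx x) x.
Proof. unfold tidx, col, in01; intros; repeat destruct Rlt_dec; simpl; lra. Qed.

Lemma col_in01 a x : col a x -> in01 x.
Proof. unfold col, in01; destruct a; simpl; lra. Qed.

Lemma col_local a x : col a x -> in01 (3 * x - d3R a).
Proof. unfold col, in01; destruct a; simpl; lra. Qed.

Lemma col_diff a b x : col a x -> col b x -> a <> b ->
  is01 (3 * x - d3R a) /\ Rabs (d3R a - d3R b) = 1.
Proof.
  intros h1 h2 ne; destruct a, b; try congruence; unfold col, is01 in *; simpl in *;
  (split; [first [left; lra | right; lra] | rabs_lra]).
Qed.

Lemma shrink_expand n z : shrink n (expand z n) = z.
Proof. destruct z; unfold shrink, expand; simpl; f_equal; field. Qed.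

Lemma expand_in01 n z : inTile n z -> in01 (fst (expand z n)) /\ in01 (snd (expand z n)).
Proof. rewrite inTile_col; intros [h1 h2]; simpl; split; apply col_local; auto. Qed.

Lemma tgen_tile (n m : N3) z : inTile n z -> inTile m z -> adjacent n m ->
  tgen U0 (n, SU0 (expand z n)) (m, SU0 (expand z m)).
Proof.
  intros hn hm hadj.
  pose proof (expand_in01 n z hn) as [e1 e2].
  pose proof (expand_in01 m z hm) as [f1 f2].
  rewrite inTile_col in hn, hm. destruct hn as [hn1 hn2], hm as [hm1 hm2].
  exists n, m, (expand z n), (expand z m).
  split; [reflexivity|]. split; [reflexivity|].
  destruct hadj as [[ha hb]|[ha hb]].
  - assert (ne : fst n <> fst m) by (intro E; rewrite E in ha; rewrite Rminus_diag, Rabs_R0 in ha; lra).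
    destruct (col_diff _ _ _ hn1 hm1 ne) as [i1 _].
    destruct (col_diff _ _ _ hm1 hn1 (not_eq_sym ne)) as [i2 _].
    split; [split; [auto|split; [auto|left; auto]]|].
    split; [split; [auto|split; [auto|left; auto]]|].
    split; [left; auto|]. rewrite !shrink_expand; reflexivity.
  - assert (ne : snd n <> snd m) by (intro E; rewrite E in hb; rewrite Rminus_diag, Rabs_R0 in hb; lra).
    destruct (col_diff _ _ _ hn2 hm2 ne) as [i1 _].
    destruct (col_diff _ _ _ hm2 hn2 (not_eq_sym ne)) as [i2 _].
    split; [split; [auto|split; [auto|right; auto]]|].
    split; [split; [auto|split; [auto|right; auto]]|].
    split; [right; auto|]. rewrite !shrink_expand; reflexivity.
Qed.

Lemma tile_equiv n m z : inTile n z -> inTile m z ->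
  @tequiv U0 (n, SU0 (expand z n)) (m, SU0 (expand z m)).
Proof.
  intros hn hm.
  destruct n as [n1 n2], m as [m1 m2].
  pose proof hn as hn'; pose proof hm as hm'.
  rewrite inTile_col in hn', hm'; simpl in hn', hm'.
  destruct hn' as [hn1 hn2], hm' as [hm1 hm2].
  destruct (D3_eq_dec n1 m1) as [e1|e1], (D3_eq_dec n2 m2) as [e2|e2].
  - subst; apply rst_refl.
  - subst. apply rst_step, tgen_tile; auto. right; split; auto; simpl.
    apply (col_diff _ _ _ hn2 hm2 e2).
  - subst. apply rst_step, tgen_tile; auto. left; split; auto; simpl.
    apply (col_diff _ _ _ hn1 hm1 e1).
  - assert (hk : inTile (m1, n2) z) by (rewrite inTile_col; simpl; auto).
    apply rst_trans with ((m1, n2), SU0 (expand z (m1, n2))).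
    + apply rst_step, tgen_tile; auto. left; split; auto; simpl.
      apply (col_diff _ _ _ hn1 hm1 e1).
    + apply rst_step, tgen_tile; auto. right; split; auto; simpl.
      apply (col_diff _ _ _ hn2 hm2 e2).
Qed.

Lemma tidx_tile (z : R * R) : in01 (fst z) -> in01 (snd z) -> inTile (tidx (fst z), tidx (snd z)) z.
Proof. intros; rewrite inTile_col; simpl; split; apply col_tidx; auto. Qed.

Lemma alpha_inv_rep (z : U0) : alpha_inv z =
  ((tidx (fst (proj1_sig z)), tidx (snd (proj1_sig z))),
   SU0 (expand (proj1_sig z) (tidx (fst (proj1_sig z)), tidx (snd (proj1_sig z))))).
Proof.
  unfold alpha_inv; f_equal. apply U0_eq. destruct z as [[x y] [h1 h2]]; simpl.
  simpl in h1, h2. rewrite !clamp01_id by (apply tidx_ok; auto). reflexivity.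
Qed.

Lemma rep_equiv (z : U0) n : inTile n (proj1_sig z) ->
  @tequiv U0 (alpha_inv z) (n, SU0 (expand (proj1_sig z) n)).
Proof.
  intros h. rewrite alpha_inv_rep. apply tile_equiv; auto.
  destruct z as [z [h1 h2]]; simpl. apply tidx_tile; auto.
Qed.

Definition nb u v := exists k, col k u /\ col k v.
Lemma nb_sym u v : nb u v -> nb v u.
Proof. intros [k [h1 h2]]; exists k; auto. Qed.

Lemma nb_of u v : in01 u -> in01 v -> u <= v ->
  (v <= 1/3 \/ 1/3 <= u) -> (v <= 2/3 \/ 2/3 <= u) -> nb u v.
Proof.
  unfold in01; intros h1 h2 h3 [h4|h4] [h5|h5];
  first [exists Defs.d0; unfold col; simpl; repeat split; lra
        |exists Defs.d1; unfold col; simpl; repeat split; lra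
        |exists Defs.d2; unfold col; simpl; repeat split; lra].
Qed.

Lemma path1_le x y : in01 x -> in01 y -> x <= y -> exists a b, in01 a /\ in01 b /\
  Rabs (x - y) = Rabs (x - a) + Rabs (a - b) + Rabs (b - y) /\ nb x a /\ nb a b /\ nb b y.
Proof.
  intros hx hy hxy.
  exists (Rmax x (Rmin y (1/3))), (Rmax x (Rmin y (2/3))).
  unfold in01 in *; unfold Rmax, Rmin; repeat destruct Rle_dec;
  refine (conj _ (conj _ (conj _ (conj _ (conj _ _))))); try lra; try rabs_lra;
  apply nb_of; unfold in01; try lra; first [left; lra | right; lra].
Qed.

Lemma path1 x y : in01 x -> in01 y -> exists a b, in01 a /\ in01 b /\
  Rabs (x - y) = Rabs (x - a) + Rabs (a - b) + Rabs (b - y) /\ nb x a /\ nb a b /\ nb b y.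
Proof.
  intros hx hy. destruct (Rle_lt_dec x y) as [h|h].
  - apply path1_le; auto.
  - destruct (path1_le y x) as (a & b & ha & hb & E & n1 & n2 & n3); auto; [lra|].
    exists b, a. split; auto. split; auto. split.
    + rewrite (Rabs_minus_sym x y), E. rewrite (Rabs_minus_sym y a), (Rabs_minus_sym a b), (Rabs_minus_sym b x). lra.
    + refine (conj _ (conj _ _)); apply nb_sym; auto.
Qed.

Definition rep (z : R * R) : N3 * U0 := alpha_inv (SU0 z).
Definition CL (a b : N3 * U0) (r : R) := exists s, chain_val U0 a b s /\ s <= r.

Lemma CL_app a b c r r' : CL a b r -> CL b c r' -> CL a c (r + r').
Proof.
  intros [s [h1 h2]] [t [h3 h4]]. exists (s + t); split; [apply chain_app with b; auto| lra].
Qed.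
Lemma CL_mono a b r r' : CL a b r -> r <= r' -> CL a b r'.
Proof. intros [s [h1 h2]] h; exists s; split; auto; lra. Qed.

Lemma seg n z w : inTile n z -> inTile n w ->
  CL (rep z) (rep w) (Rabs (fst z - fst w) + Rabs (snd z - snd w)).
Proof.
  intros hz hw.
  assert (vz : proj1_sig (SU0 z) = z).
  { rewrite inTile_col in hz; destruct hz; apply SU0_val; eapply col_in01; eauto. }
  assert (vw : proj1_sig (SU0 w) = w).
  { rewrite inTile_col in hw; destruct hw; apply SU0_val; eapply col_in01; eauto. }
  pose proof (rep_equiv (SU0 z) n) as H1. rewrite vz in H1. specialize (H1 hz).
  pose proof (rep_equiv (SU0 w) n) as H2. rewrite vw in H2. specialize (H2 hw).
  exists (bdist U0 (n, SU0 (expand z n)) (n, SU0 (expand w n)) + 0). split.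
  - unfold rep. eapply cv_jump; [exact H1|]. apply cv_step.
    eapply cv_jump; [apply rst_sym; exact H2|]. apply cv_refl.
  - unfold bdist; simpl. destruct N_eq_dec as [_|c]; [|congruence].
    unfold taxi. destruct (expand_in01 n z hz), (expand_in01 n w hw).
    rewrite !SU0_val by assumption. simpl. rabs_lra.
Qed.

Lemma hseg u v c : in01 c -> nb u v -> CL (rep (u, c)) (rep (v, c)) (Rabs (u - v)).
Proof.
  intros hc [k [h1 h2]].
  eapply CL_mono; [apply (seg (k, tidx c))|].
  - rewrite inTile_col; simpl; split; auto; apply col_tidx; auto.
  - rewrite inTile_col; simpl; split; auto; apply col_tidx; auto.
  - simpl. rewrite Rminus_diag, Rabs_R0. lra.
Qed.

Lemma vseg u v c : in01 c -> nb u v -> CL (rep (c, u)) (rep (c, v)) (Rabs (u - v)).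
Proof.
  intros hc [k [h1 h2]].
  eapply CL_mono; [apply (seg (tidx c, k))|].
  - rewrite inTile_col; simpl; split; auto; apply col_tidx; auto.
  - rewrite inTile_col; simpl; split; auto; apply col_tidx; auto.
  - simpl. rewrite Rminus_diag, Rabs_R0. lra.
Qed.

Lemma path2 z w : in01 (fst z) -> in01 (snd z) -> in01 (fst w) -> in01 (snd w) ->
  CL (rep z) (rep w) (Rabs (fst z - fst w) + Rabs (snd z - snd w)).
Proof.
  destruct z as [z1 z2], w as [w1 w2]; simpl; intros h1 h2 h3 h4.
  destruct (path1 z1 w1 h1 h3) as (a & b & ha & hb & E1 & n1 & n2 & n3).
  destruct (path1 z2 w2 h2 h4) as (c & d & hc & hd & E2 & m1 & m2 & m3).
  eapply CL_mono.
  - eapply CL_app; [apply (hseg z1 a z2); auto|].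
    eapply CL_app; [apply (hseg a b z2); auto|].
    eapply CL_app; [apply (hseg b w1 z2); auto|].
    eapply CL_app; [apply (vseg z2 c w1); auto|].
    eapply CL_app; [apply (vseg c d w1); auto|].
    apply (vseg d w2 w1); auto.
  - lra.
Qed.

Lemma alpha_inv_short (x y : U0) : qdist (alpha_inv x) (alpha_inv y) <= taxi x y.
Proof.
  destruct (path2 (proj1_sig x) (proj1_sig y)) as [s [Hc Hs]];
   try apply (proj2_sig x); try apply (proj2_sig y).
  unfold rep in Hc. rewrite !SU0_proj in Hc.
  eapply Rle_trans; [apply qdist_le; exact Hc|]. unfold taxi. lra.
Qed.

Lemma U0_alpha_tequiv (a b : N3 * U0) : tequiv a b -> alpha a = alpha b.
Proof.
  intros H.
  pose proof (tequiv_alpha_tmap U0 (fun x => x) (fun p _ => eq_refl) a b H) as E.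
  destruct a, b; exact E.
Qed.

Lemma U0_alpha_short (a b : N3 * U0) : ms_dist (alpha a) (alpha b) <= qdist a b.
Proof.
  pose proof (qdist_alpha U0 (fun x => x) (fun p _ => eq_refl)) as E.
  assert (Hs : is_short (fun x : U0 => x)) by (intros x y; lra).
  specialize (E Hs a b). destruct a, b; exact E.
Qed.

Lemma U0_alpha_S p n : inM0 p -> inTile n p -> alpha (n, sq_S (expand p n)) = sq_S p.
Proof.
  intros hp ht. simpl. destruct (expand_in01 n p ht) as [e1 e2].
  rewrite alpha_SU0 by assumption. rewrite shrink_expand. reflexivity.
Qed.

Lemma U0_alpha_inv_r (z : U0) : alpha (alpha_inv z) = z.
Proof.
  apply U0_eq. destruct z as [[x y] h]; unfold alpha, alpha_inv; simpl. f_equal; field.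
Qed.

Lemma U0_alpha_inv_l (c : N3 * U0) : tequiv (alpha_inv (alpha c)) c.
Proof.
  destruct c as [n z].
  assert (E : SU0 (expand (proj1_sig (alpha (n, z))) n) = z).
  { apply U0_eq. destruct z as [[x y] [h1 h2]]. unfold alpha; simpl.
    simpl in h1, h2.
    replace (3 * ((d3R (fst n) + x) / 3) - d3R (fst n)) with x by field.
    replace (3 * ((d3R (snd n) + y) / 3) - d3R (snd n)) with y by field.
    rewrite !clamp01_id by auto. reflexivity. }
  pose proof (rep_equiv (alpha (n, z)) n) as H. rewrite E in H. apply H.
  destruct z as [[x y] [h1 h2]]; unfold alpha, inTile, in01 in *; simpl in *.
  destruct (fst n), (snd n); simpl; lra.
Qed.

Lemma U0_coalg : is_coalg U0 alpha_inv.
Proof.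
  split.
  - intros x y. apply alpha_inv_short.
  - intros p n hp ht. simpl.
    destruct (inM0_in01 p hp) as [h1 h2].
    pose proof (rep_equiv (SU0 p) n) as H. rewrite SU0_val in H by assumption.
    apply H; auto.
Qed.

Lemma clamp_lip a b : Rabs (clamp01 a - clamp01 b) <= Rabs (a - b).
Proof. unfold clamp01, Rmax, Rmin; repeat destruct Rle_dec; rabs_lra. Qed.

Lemma SU0_short (a b : R * R) :
  taxi (SU0 a) (SU0 b) <= Rabs (fst a - fst b) + Rabs (snd a - snd b).
Proof.
  unfold taxi; simpl. pose proof (clamp_lip (fst a) (fst b)). pose proof (clamp_lip (snd a) (snd b)). lra.
Qed.

Lemma inM0_00 : inM0 (0, 0).
Proof. unfold inM0, in01, is01; simpl. split; [lra|]. split; [lra|]. left; left; reflexivity. Qed.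

Section McShane.
Variable X : SquaMS.
Variable phi : R * R -> R.
Hypothesis phi_lip : forall p q, phi p - phi q <= Rabs (fst p - fst q) + Rabs (snd p - snd q).
Hypothesis phi_lb : forall p, inM0 p -> -1 <= phi p.

Definition Eg (x : X) (t : R) := exists p, inM0 p /\ t = phi p + ms_dist x (sq_S p).
Definition gext (x : X) := real (Glb_Rbar (Eg x)).

Lemma Eg_ne x : Eg x (phi (0,0) + ms_dist x (sq_S (0,0))).
Proof. exists (0,0); split; auto using inM0_00. Qed.
Lemma Eg_lb x : forall t, Eg x t -> -1 <= t.
Proof. intros t [p [hp ->]]. pose proof (phi_lb p hp). pose proof (dist_ge0 _ x (sq_S p)). lra. Qed.

Lemma gext_lip x y : gext x <= gext y + ms_dist x y.
Proof.
  assert (gext x - ms_dist x y <= gext y); [|lra].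
  unfold gext at 2. apply (proj2 (glb_spec _ _ _ (Eg_ne y) (Eg_lb y))).
  intros t [p [hp ->]].
  assert (gext x <= phi p + ms_dist x (sq_S p)).
  { unfold gext. apply (proj1 (glb_spec _ _ _ (Eg_ne x) (Eg_lb x))). exists p; auto. }
  pose proof (ms_dist_tri _ x y (sq_S p)). lra.
Qed.

Lemma gext_S q : inM0 q -> gext (sq_S q) = phi q.
Proof.
  intros hq. apply Rle_antisym.
  - unfold gext. apply (proj1 (glb_spec _ _ _ (Eg_ne _) (Eg_lb _))).
    exists q; split; auto. rewrite ms_dist_refl. lra.
  - unfold gext. apply (proj2 (glb_spec _ _ _ (Eg_ne _) (Eg_lb _))).
    intros t [p [hp ->]].
    destruct q as [q1 q2], p as [p1 p2].
    pose proof (sq_2 X q1 q2 p1 p2 hq hp). pose proof (phi_lip (q1, q2) (p1, p2)).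
    simpl in *. lra.
Qed.
End McShane.

Section Coalg.
Variable X : SquaMS.
Variable e : X -> N3 * X.
Hypothesis He : is_coalg X e.

Definition phi1 (p : R * R) := fst p + snd p.
Definition phi2 (p : R * R) := fst p - snd p.
Lemma phi1_lip p q : phi1 p - phi1 q <= Rabs (fst p - fst q) + Rabs (snd p - snd q).
Proof. unfold phi1; rabs_lra. Qed.
Lemma phi2_lip p q : phi2 p - phi2 q <= Rabs (fst p - fst q) + Rabs (snd p - snd q).
Proof. unfold phi2; rabs_lra. Qed.
Lemma phi1_lb p : inM0 p -> -1 <= phi1 p.
Proof. intros [h1 [h2 _]]; unfold phi1, in01 in *; lra. Qed.
Lemma phi2_lb p : inM0 p -> -1 <= phi2 p.
Proof. intros [h1 [h2 _]]; unfold phi2, in01 in *; lra. Qed.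

Definition h0 (x : X) : U0 :=
  SU0 ((gext X phi1 x + gext X phi2 x) / 2, (gext X phi1 x - gext X phi2 x) / 2).

Lemma h0_short : is_short h0.
Proof.
  intros x y. simpl. eapply Rle_trans; [apply SU0_short|]. simpl.
  pose proof (gext_lip X phi1 phi1_lb x y).
  pose proof (gext_lip X phi1 phi1_lb y x).
  pose proof (gext_lip X phi2 phi2_lb x y).
  pose proof (gext_lip X phi2 phi2_lb y x).
  rewrite (ms_dist_sym _ y x) in *. rabs_lra.
Qed.

Lemma h0_S p : inM0 p -> h0 (sq_S p) = SU0 p.
Proof.
  intros hp. unfold h0.
  rewrite (gext_S X phi1 phi1_lip phi1_lb p hp), (gext_S X phi2 phi2_lip phi2_lb p hp).
  destruct p as [p1 p2]; unfold phi1, phi2; simpl. f_equal. f_equal; field.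
Qed.

Fixpoint hk (k : nat) (x : X) : U0 :=
  match k with O => h0 x | S k' => alpha (fst (e x), hk k' (snd (e x))) end.

Definition Pinv (p : R * R) (b : N3 * X) :=
  exists m q, b = (m, sq_S q) /\ inM0 q /\ shrink m q = p.

Lemma Pinv_tequiv p a b : tequiv a b -> (Pinv p a <-> Pinv p b).
Proof.
  induction 1 as [a b Hg| a | a b H IH | a b c H1 IH1 H2 IH2].
  - destruct Hg as (m1 & n1 & p1 & q1 & -> & -> & Hp & Hq & _ & Hs).
    split.
    + intros (m & q & E & hq & hs). injection E as <- E.
      apply (sq_inj X) in E; auto. subst q.
      exists n1, q1. split; auto. split; auto. congruence.
    + intros (m & q & E & hq & hs). injection E as <- E.
      apply (sq_inj X) in E; auto. subst q.
      exists m1, p1. split; auto. split; auto. congruence.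
  - tauto.
  - tauto.
  - tauto.
Qed.

Lemma tidx_is01 x : is01 x -> is01 (3 * x - d3R (tidx x)).
Proof.
  unfold is01, tidx; intros [-> | ->]; repeat destruct Rlt_dec; simpl;
  first [left; lra | right; lra].
Qed.

Lemma eS p : inM0 p -> exists m q, e (sq_S p) = (m, sq_S q) /\ inM0 q /\ shrink m q = p.
Proof.
  intros hp. destruct (inM0_in01 p hp) as [h1 h2].
  set (n := (tidx (fst p), tidx (snd p))).
  assert (ht : inTile n p) by (apply tidx_tile; auto).
  pose proof (proj2 He p n hp ht) as H.
  apply (Pinv_tequiv p _ _ H).
  exists n, (expand p n). split; auto. split; [|apply shrink_expand].
  destruct (expand_in01 n p ht) as [e1 e2].
  split; auto. split; auto.
  destruct hp as [_ [_ [hi|hi]]]; [left|right]; apply tidx_is01; auto.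
Qed.

Lemma hk_S k p : inM0 p -> hk k (sq_S p) = SU0 p.
Proof.
  revert p; induction k; intros p hp.
  - apply h0_S; auto.
  - simpl. destruct (eS p hp) as (m & q & E & hq & hs). rewrite E; simpl.
    rewrite IHk by auto. destruct (inM0_in01 q hq).
    rewrite alpha_SU0 by auto. rewrite hs. reflexivity.
Qed.

Lemma hk_short k : is_short (hk k).
Proof.
  induction k.
  - apply h0_short.
  - intros x y.
    pose proof (qdist_alpha X (hk k) (fun p hp => hk_S k p hp) IHk (e x) (e y)) as H.
    eapply Rle_trans; [exact H| exact (proj1 He x y)].
Qed.

Lemma hk_cauchy k j x : taxi (hk (k + j) x) (hk k x) <= 2 / 3 ^ k.
Proof.
  revert x; induction k; intros x.
  - simpl. pose proof (taxi_le2 (hk j x) (h0 x)). lra.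
  - simpl. rewrite taxi_alpha_same. pose proof (IHk (snd (e x))). pose proof (pow3_pos k).
    replace (2 / (3 * 3 ^ k)) with ((2 / 3 ^ k) / 3) by (field; lra). lra.
Qed.
End Coalg.

Lemma lim_exists (u : nat -> R) (c : R) :
  (forall k j, Rabs (u (k + j)%nat - u k) <= c / 3 ^ k) ->
  exists l, forall k, Rabs (l - u k) <= c / 3 ^ k.
Proof.
  intros Hu.
  assert (Hc : Cauchy_crit u).
  { intros eps heps. destruct (small3 (2 * c) eps heps) as [N HN].
    exists N. intros n m hn hm. unfold Rdist.
    pose proof (Hu N (n - N)%nat) as A. pose proof (Hu N (m - N)%nat) as B.
    replace (N + (n - N))%nat with n in A by lia.
    replace (N + (m - N))%nat with m in B by lia.
    assert (2 * c / 3 ^ N = c / 3 ^ N + c / 3 ^ N) by (unfold Rdiv; ring).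
    rabs_lra. }
  destruct (R_complete u Hc) as [l Hl].
  exists l. intros k.
  destruct (Rle_lt_dec (Rabs (l - u k)) (c / 3 ^ k)) as [h|h]; auto.
  exfalso.
  destruct (Hl (Rabs (l - u k) - c / 3 ^ k)) as [N HN]; [lra|].
  specialize (HN (k + N)%nat ltac:(lia)). unfold Rdist in HN.
  pose proof (Hu k N). rabs_lra.
Qed.

Section Coalg2.
Variable X : SquaMS.
Variable e : X -> N3 * X.
Hypothesis He : is_coalg X e.

Lemma hk_lim x : exists z : U0, forall k, taxi z (hk X e k x) <= 4 / 3 ^ k.
Proof.
  set (u1 := fun k => fst (proj1_sig (hk X e k x))).
  set (u2 := fun k => snd (proj1_sig (hk X e k x))).
  assert (B1 : forall k j, Rabs (u1 (k + j)%nat - u1 k) <= 2 / 3 ^ k).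
  { intros k j. pose proof (hk_cauchy X e k j x). unfold taxi in H. unfold u1.
    pose proof (Rabs_pos (snd (proj1_sig (hk X e (k + j) x)) - snd (proj1_sig (hk X e k x)))). lra. }
  assert (B2 : forall k j, Rabs (u2 (k + j)%nat - u2 k) <= 2 / 3 ^ k).
  { intros k j. pose proof (hk_cauchy X e k j x). unfold taxi in H. unfold u2.
    pose proof (Rabs_pos (fst (proj1_sig (hk X e (k + j) x)) - fst (proj1_sig (hk X e k x)))). lra. }
  destruct (lim_exists u1 2 B1) as [l1 L1].
  destruct (lim_exists u2 2 B2) as [l2 L2].
  assert (I1 : forall k, in01 (u1 k)) by (intros k; apply (proj1 (proj2_sig (hk X e k x)))).
  assert (I2 : forall k, in01 (u2 k)) by (intros k; apply (proj2 (proj2_sig (hk X e k x)))).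
  assert (h1 : in01 l1).
  { unfold in01 in *. split.
    - assert (-l1 <= 0); [|lra]. apply (le_pow3 _ 2). intros k. specialize (L1 k). specialize (I1 k). rabs_lra.
    - assert (l1 - 1 <= 0); [|lra]. apply (le_pow3 _ 2). intros k. specialize (L1 k). specialize (I1 k). rabs_lra. }
  assert (h2 : in01 l2).
  { unfold in01 in *. split.
    - assert (-l2 <= 0); [|lra]. apply (le_pow3 _ 2). intros k. specialize (L2 k). specialize (I2 k). rabs_lra.
    - assert (l2 - 1 <= 0); [|lra]. apply (le_pow3 _ 2). intros k. specialize (L2 k). specialize (I2 k). rabs_lra. }
  exists (exist _ (l1, l2) (conj h1 h2)). intros k. unfold taxi; simpl.
  specialize (L1 k). specialize (L2 k). unfold u1, u2 in *.
  assert (4 / 3 ^ k = 2 / 3 ^ k + 2 / 3 ^ k) by (unfold Rdiv; ring). lra.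
Qed.

Lemma close_eq (z w : U0) c : (forall k, taxi z w <= c / 3 ^ k) -> z = w.
Proof. intros H. apply taxi_eq0. apply (le_pow3 _ c). auto. Qed.

Lemma corec_unique (h h' : X -> U0) :
  (forall x, h x = alpha (tmap h (e x))) -> (forall x, h' x = alpha (tmap h' (e x))) -> h = h'.
Proof.
  intros H H'. apply functional_extensionality. intros x.
  apply (close_eq _ _ 2). intros k. revert x. induction k; intros x.
  - simpl. pose proof (taxi_le2 (h x) (h' x)). lra.
  - rewrite (H x), (H' x). unfold tmap. rewrite taxi_alpha_same.
    pose proof (IHk (snd (e x))). pose proof (pow3_pos k). simpl.
    replace (2 / (3 * 3 ^ k)) with ((2 / 3 ^ k) / 3) by (field; lra). lra.
Qed.

Lemma corec_exists : exists h : X -> U0, is_mor h /\ forall x, h x = alpha (tmap h (e x)).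
Proof.
  set (h := fun x => proj1_sig (constructive_indefinite_description _ (hk_lim x))).
  assert (Hh : forall x k, taxi (h x) (hk X e k x) <= 4 / 3 ^ k).
  { intros x. unfold h. destruct (constructive_indefinite_description _ (hk_lim x)); simpl; auto. }
  assert (Fix : forall x, h x = alpha (tmap h (e x))).
  { intros x. set (w := alpha (tmap h (e x))).
    assert (Hw : forall k, taxi w (hk X e k x) <= 4 / 3 ^ k).
    { intros [|k].
      - simpl. pose proof (taxi_le2 w (h0 X x)). lra.
      - unfold w, tmap. simpl hk. rewrite taxi_alpha_same.
        pose proof (Hh (snd (e x)) k). pose proof (pow3_pos k). simpl.
        replace (4 / (3 * 3 ^ k)) with ((4 / 3 ^ k) / 3) by (field; lra). lra. }
    apply (close_eq _ _ 8). intros k.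
    pose proof (taxi_tri (h x) (hk X e k x) w). rewrite (taxi_sym (hk X e k x) w) in H.
    pose proof (Hh x k). pose proof (Hw k).
    assert (8 / 3 ^ k = 4 / 3 ^ k + 4 / 3 ^ k) by (unfold Rdiv; ring). lra. }
  exists h. split; [split|]; auto.
  - intros x y. simpl.
    assert (taxi (h x) (h y) - ms_dist x y <= 0); [|lra].
    apply (le_pow3 _ 8). intros k.
    pose proof (taxi_tri (h x) (hk X e k x) (h y)).
    pose proof (taxi_tri (hk X e k x) (hk X e k y) (h y)).
    pose proof (hk_short X e He k x y). simpl in H1.
    pose proof (Hh x k). pose proof (Hh y k). rewrite taxi_sym in H3.
    assert (8 / 3 ^ k = 4 / 3 ^ k + 4 / 3 ^ k) by (unfold Rdiv; ring). lra.
  - intros p hp. apply (close_eq _ _ 4). intros k.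
    pose proof (Hh (sq_S p) k) as H. rewrite (hk_S X e He k p hp) in H. exact H.
Qed.
End Coalg2.

Theorem mainTheorem6 :
  ((forall a b : N3 * U0, tequiv a b -> alpha a = alpha b) /\
   (forall a b : N3 * U0, ms_dist (alpha a) (alpha b) <= qdist a b) /\
   (forall p n, inM0 p -> inTile n p -> alpha (n, sq_S (expand p n)) = sq_S p) /\
   (forall z : U0, alpha (alpha_inv z) = z) /\
   (forall c : N3 * U0, tequiv (alpha_inv (alpha c)) c) /\
   is_coalg U0 alpha_inv) /\
  (forall (X : SquaMS) (e : X -> N3 * X), is_coalg X e ->
     exists! h : X -> U0, is_mor h /\ forall x, h x = alpha (tmap h (e x))) /\
  (forall (X : SquaMS) (e : X -> N3 * X), is_coalg X e ->
     exists! h : X -> U0, is_mor h /\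
       forall x, tequiv (alpha_inv (h x)) (tmap h (e x))).
Proof.
  split; [|split].
  - split; [exact U0_alpha_tequiv|]. split; [exact U0_alpha_short|].
    split; [exact U0_alpha_S|]. split; [exact U0_alpha_inv_r|].
    split; [exact U0_alpha_inv_l|]. exact U0_coalg.
  - intros X e He. destruct (corec_exists X e He) as [h [Hm Hf]].
    exists h. split; [split; auto|]. intros h' [_ Hf'].
    apply (corec_unique X e); auto.
  - intros X e He. destruct (corec_exists X e He) as [h [Hm Hf]].
    exists h. split; [split; auto|].
    + intros x. rewrite (Hf x) at 1. apply U0_alpha_inv_l.
    + intros h' [_ Hf']. apply (corec_unique X e); auto.
      intros x. rewrite <- (U0_alpha_inv_r (h' x)) at 1. apply U0_alpha_tequiv. auto.
Qed.
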